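(* Let $\theta_1<\theta_2$, $f\in C^2([\theta_1,\theta_2])$, $\gamma>1$, and let $I\subseteq[\theta_1,\theta_2]$ be a closed interval. Suppose that, for positive constants $A$ and $\alpha$ with $\alpha<2\gamma-3$, one of the following holds: $|f'(s)f''(s)|\ge A(s-\theta_1)^\alpha$ for all $s\in I$; or $|f'(s)f''(s)|\ge A(\theta_2-s)^\alpha$ for all $s\in I$. Then there is a constant $C>0$ depending only on $A,\alpha,\theta_1,\theta_2,\gamma$ such that $\int_I|f(s)|^{-1/\gamma}\,ds\le C$. *)

(* Defs.v *)
From HB Require Import structures.
From mathcomp Require Import all_boot all_order all_algebra.
From mathcomp Require Import all_classical all_reals all_analysis.
Set Implicit Arguments. Unset Strict Implicit. Unset Printing Implicit Defensive.
Import Order.TTheory GRing.Theory Num.Theory.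
Import numFieldNormedType.Exports.
Local Open Scope classical_set_scope.
Local Open Scope ring_scope.

Definition C2_on {R : realType} (t1 t2 : R) (f : R -> R) : Prop :=
  [/\ {in `[t1, t2], forall x, derivable f x 1},
      {in `[t1, t2], forall x, derivable (derive1 f) x 1} &
      {within `[t1, t2], continuous (derive1 (derive1 f) : R -> R)}].

Definition neg_pow_abs {R : realType} (g : R) (f : R -> R) (s : R) : \bar R :=
  if f s == 0 then +oo%E else ((`|f s| `^ (- g^-1))%:E).

(* Main.v *)
Require Import Defs.
From HB Require Import structures.
From mathcomp Require Import all_boot all_order all_algebra.
From mathcomp Require Import all_classical all_reals all_analysis.
From mathcomp Require Import measurable_realfun.
From mathcomp Require Import ring lra zify.
Import Order.TTheory GRing.Theory Num.Theory.
Import numFieldNormedType.Exports.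
Local Open Scope classical_set_scope.
Local Open Scope ring_scope.
Lemma gen_int (R : realType) (h : R -> R) (u v B : R) : u < v ->
  (forall x, u <= x <= v -> 0 <= h x) ->
  measurable_fun `[u, v] (EFin \o h) ->
  (forall w1 w2, u < w1 -> w1 < w2 -> w2 < v ->
     (\int[lebesgue_measure]_(x in `[w1, w2]) (h x)%:E <= B%:E)%E) ->
  (\int[lebesgue_measure]_(x in `[u, v]) (h x)%:E <= B%:E)%E.
Proof.
move=> uv h0 mh hB.
have vu0 : 0 < v - u by lra.
pose d (n : nat) := (v - u) / (n.+3)%:R.
have d0 n : 0 < d n by rewrite /d divr_gt0 // subr_gt0.
have d2 n : d n < (v - u) / 2.
  rewrite /d ltr_pM2l ?subr_gt0 // ltf_pV2 ?posrE // ltr_nat //.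
pose F (n : nat) : set R := [set` `[u + d n, v - d n]].
have mF n : measurable (F n) by exact: measurable_itv.
have ndF : nondecreasing_seq F.
  move=> n m nm; rewrite subsetEset => x; rewrite /F /= !in_itv /= => /andP[h1 h2].
  have dd : d m <= d n.
    rewrite /d ler_pM2l ?subr_gt0 // lef_pV2 ?posrE // ler_nat //.
  apply/andP; split; lra.
have Fsub n : F n `<=` `[u, v].
  move=> x; rewrite /F /= !in_itv /=. 
  have := d0 n; move=> ? /andP[? ?]; apply/andP; split; lra.
have mU : measurable (\bigcup_n F n) by exact: bigcupT_measurable.
have Usub : \bigcup_n F n `<=` `[u, v] by move=> x [n _ /Fsub].
have sub : `]u, v[ `<=` \bigcup_n F n.
  move=> x /=; rewrite in_itv /= => /andP[ux xv].
  pose m := Num.min (x - u) (v - x).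
  have m0 : 0 < m by rewrite lt_min !subr_gt0 ux xv.
  have := @archi_boundP R ((v - u) / m) (ltW (divr_gt0 vu0 m0)).
  set N := Num.Def.archi_bound _ => hN.
  exists N => //; rewrite /F /= in_itv /=.
  have dm : d N <= m.
    rewrite /d ler_pdivrMr ?ltr0n // mulrC -ler_pdivrMr //.
    apply: (le_trans (ltW hN) _); rewrite ler_nat; lia.
  move: dm; rewrite le_min => /andP[dm1 dm2].
  apply/andP; split; lra.
have mUh : measurable_fun (\bigcup_n F n) (EFin \o h).
  exact: measurable_funS mh.
have U0 : forall x, (\bigcup_n F n) x -> (0 <= (EFin \o h) x)%E.
  by move=> x /Usub /=; rewrite in_itv /= lee_fin => /h0.
rewrite (@integral_itv_bndoo _ u v _ true false); last first.
  by apply: measurable_funS mh => //; exact: subset_itv_oo_cc.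
apply: (le_trans (@ge0_subset_integral _ _ _ lebesgue_measure _ _ (measurable_itv _) mU (EFin \o h) mUh U0 sub)) => //.
have cv := @ge0_nondecreasing_set_cvg_integral _ (measurableTypeR R) R F (EFin \o h) (@lebesgue_measure R) ndF mF
  (fun i => measurable_funS (measurable_itv _) (Fsub i) mh)
  (fun i x Fx => U0 x (ex_intro2 _ _ i I Fx)).
rewrite -(cvg_lim _ cv) //.
apply: lime_le; first by apply/cvg_ex; eexists; exact: cv.
near=> n; apply: hB.
- by have := d0 n; lra.
- by have := d2 n; lra.
- by have := d0 n; lra.
Unshelve. all: by end_near.
Qed.
Lemma is_derive_shpow (R : realType) (z a x : R) : z < x ->
  is_derive x 1 (fun y => (y - z) `^ a) (a * (x - z) `^ (a - 1)).
Proof.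
move=> zx.
have h1 : is_derive x 1 (fun y : R => y - z) 1.
  have := is_deriveB (is_derive_id x (1:R)) (is_derive_cst z x (1:R)).
  by rewrite subr0.
have h2 : is_derive ((fun y : R => y - z) x) 1 (@powR R ^~ a) (a * (x - z) `^ (a - 1)).
  by apply: is_derive1_powR; rewrite subr_gt0.
have := @is_derive1_comp R (@powR R ^~ a) (fun y => y - z) x _ _ h2 h1.
by rewrite mulr1.
Qed.
Lemma is_derive_shpowN (R : realType) (z a x : R) : x < z ->
  is_derive x 1 (fun y => (z - y) `^ a) (- (a * (z - x) `^ (a - 1))).
Proof.
move=> zx.
have h1 : is_derive x 1 (fun y : R => z - y) (-1).
  have := is_deriveB (is_derive_cst z x (1:R)) (is_derive_id x (1:R)).
  by rewrite sub0r.
have h2 : is_derive ((fun y : R => z - y) x) 1 (@powR R ^~ a) (a * (z - x) `^ (a - 1)).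
  by apply: is_derive1_powR; rewrite subr_gt0.
have := @is_derive1_comp R (@powR R ^~ a) (fun y => z - y) x _ _ h2 h1.
by rewrite mulrN1.
Qed.

Lemma meas_pow (R : realType) (z r : R) :
  measurable_fun setT (EFin \o (fun x : R => `|x - z| `^ r)).
Proof.
apply: measurableT_comp => //.
apply: (@measurableT_comp _ _ _ _ _ _ (@powR R ^~ r)); first exact: measurable_powR.
apply: (@measurableT_comp _ _ _ _ _ _ (fun x : R => `|x|)) => //.
exact: measurable_funB.
Qed.

Lemma pow_int_right (R : realType) (z L r : R) : 0 < L -> 0 <= r -> r < 1 ->
  (\int[lebesgue_measure]_(x in `[z, (z + L)%R]) ((`|x - z| `^ (- r))%R)%:E
     <= ((L `^ (1 - r) / (1 - r))%R)%:E)%E.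
Proof.
move=> L0 r0 r1.
apply: gen_int.
- by rewrite ltrDl.
- by move=> x _; exact: powR_ge0.
- by move: (@meas_pow R z (- r)); apply: measurable_funS.
move=> w1 w2 zw1 w12 w2L.
have r10 : 0 < 1 - r by lra.
pose F := fun y : R => (1 - r)^-1 * (y - z) `^ (1 - r).
have dF : forall x, z < x -> is_derive x 1 F ((x - z) `^ (- r)).
  move=> x zx; have := is_deriveZ ((1 - r)^-1) (@is_derive_shpow R z (1 - r) x zx).
  rewrite /F /= /GRing.scale /= mulrA mulVf ?gt_eqF // mul1r.
  have -> : 1 - r - 1 = - r by ring.
  by [].
have -> : (\int[lebesgue_measure]_(x in `[w1, w2]) ((`|x - z| `^ (- r))%R)%:E =
          \int[lebesgue_measure]_(x in `[w1, w2]) (((x - z) `^ (- r))%R)%:E)%E.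
  apply: eq_integral => x; rewrite inE /= in_itv /= => /andP[h _].
  by rewrite ger0_norm //; lra.
rewrite (@continuous_FTC2 _ _ F).
- rewrite lee_fin /F.
  have h1 : 0 <= (1 - r)^-1 * (w1 - z) `^ (1 - r).
    by rewrite mulr_ge0 ?powR_ge0 // invr_ge0 ltW.
  have h2 : (w2 - z) `^ (1 - r) <= L `^ (1 - r).
    by apply: ge0_ler_powR; rewrite ?nnegrE; lra.
  have h3 : (1 - r)^-1 * (w2 - z) `^ (1 - r) <= (1 - r)^-1 * L `^ (1 - r).
    by rewrite ler_pM2l ?invr_gt0.
  rewrite [X in _ <= X]mulrC; lra.
- exact: w12.
- apply: derivable_within_continuous => x; rewrite in_itv /= => /andP[h _].
  have zx : z < x by lra.
  by case: (@is_derive_shpow R z (- r) x zx) => + _.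
- split.
  + move=> x; rewrite in_itv /= => /andP[h _].
    have zx : z < x by lra.
    by case: (dF x zx).
  + apply: cvg_at_right_filter; apply: differentiable_continuous.
    by apply/derivable1_diffP; case: (dF w1 zw1).
  + apply: cvg_at_left_filter; apply: differentiable_continuous.
    by apply/derivable1_diffP; case: (dF w2 (lt_trans zw1 w12)).
- move=> x; rewrite in_itv /= => /andP[h _].
  have zx : z < x by lra.
  by rewrite derive1E; case: (dF x zx).
Qed.

Lemma pow_int_left (R : realType) (z L r : R) : 0 < L -> 0 <= r -> r < 1 ->
  (\int[lebesgue_measure]_(x in `[(z - L)%R, z]) ((`|x - z| `^ (- r))%R)%:E
     <= ((L `^ (1 - r) / (1 - r))%R)%:E)%E.
Proof.
move=> L0 r0 r1.
apply: gen_int.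
- by rewrite gtrBl.
- by move=> x _; exact: powR_ge0.
- by move: (@meas_pow R z (- r)); apply: measurable_funS.
move=> w1 w2 zw1 w12 w2L.
have r10 : 0 < 1 - r by lra.
pose F := fun y : R => - ((1 - r)^-1 * (z - y) `^ (1 - r)).
have dF : forall x, x < z -> is_derive x 1 F ((z - x) `^ (- r)).
  move=> x zx; have := is_deriveN (is_deriveZ ((1 - r)^-1) (@is_derive_shpowN R z (1 - r) x zx)).
  rewrite /F /= /GRing.scale /= mulrN opprK mulrA mulVf ?gt_eqF // mul1r.
  have -> : 1 - r - 1 = - r by ring.
  by [].
have -> : (\int[lebesgue_measure]_(x in `[w1, w2]) ((`|x - z| `^ (- r))%R)%:E =
          \int[lebesgue_measure]_(x in `[w1, w2]) (((z - x) `^ (- r))%R)%:E)%E.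
  apply: eq_integral => x; rewrite inE /= in_itv /= => /andP[_ h].
  by rewrite distrC ger0_norm //; lra.
rewrite (@continuous_FTC2 _ _ F).
- rewrite lee_fin /F.
  have h1 : 0 <= (1 - r)^-1 * (z - w2) `^ (1 - r).
    by rewrite mulr_ge0 ?powR_ge0 // invr_ge0 ltW.
  have h2 : (z - w1) `^ (1 - r) <= L `^ (1 - r).
    by apply: ge0_ler_powR; rewrite ?nnegrE; lra.
  have h3 : (1 - r)^-1 * (z - w1) `^ (1 - r) <= (1 - r)^-1 * L `^ (1 - r).
    by rewrite ler_pM2l ?invr_gt0.
  rewrite [X in _ <= X]mulrC; lra.
- exact: w12.
- apply: derivable_within_continuous => x; rewrite in_itv /= => /andP[_ h].
  have zx : x < z by lra.
  by case: (@is_derive_shpowN R z (- r) x zx) => + _.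
- split.
  + move=> x; rewrite in_itv /= => /andP[_ h].
    have zx : x < z by lra.
    by case: (dF x zx).
  + apply: cvg_at_right_filter; apply: differentiable_continuous.
    by apply/derivable1_diffP; case: (dF w1 (lt_trans w12 w2L)).
  + apply: cvg_at_left_filter; apply: differentiable_continuous.
    by apply/derivable1_diffP; case: (dF w2 w2L).
- move=> x; rewrite in_itv /= => /andP[_ h].
  have zx : x < z by lra.
  by rewrite derive1E; case: (dF x zx).
Qed.

Lemma pow_int_two (R : realType) (z L r : R) : 0 < L -> 0 <= r -> r < 1 ->
  (\int[lebesgue_measure]_(x in `[(z - L)%R, (z + L)%R]) ((`|x - z| `^ (- r))%R)%:E
     <= ((2 * (L `^ (1 - r) / (1 - r)))%R)%:E)%E.
Proof.
move=> L0 r0 r1.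
have mf := @meas_pow R z (- r).
set A := `[(z - L)%R, z[%classic.
set B := `[z, (z + L)%R]%classic.
have mA : measurable A by exact: measurable_itv.
have mB : measurable B by exact: measurable_itv.
have sub : `[(z - L)%R, (z + L)%R] `<=` A `|` B.
  move=> x; rewrite /A /B /= !in_itv /= => /andP[h1 h2].
  have [xz|zx] := ltP x z; [left|right]; apply/andP; split => //; lra.
apply: (le_trans (@ge0_subset_integral _ _ _ lebesgue_measure _ _ (measurable_itv _) (measurableU _ _ mA mB) (EFin \o (fun x : R => `|x - z| `^ (- r))) _ _ sub)).
- by move: mf; apply: measurable_funS.
- by move=> x _; rewrite lee_fin powR_ge0.
rewrite ge0_integral_setU //; last 3 first.
- by move: mf; apply: measurable_funS.
- by move=> x _; rewrite lee_fin powR_ge0.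
- rewrite /A /B; apply/disj_setPS => x [/=]; rewrite !in_itv /= => /andP[_ h1] /andP[h2 _].
  by lra.
have -> : (2 * (L `^ (1 - r) / (1 - r)))%:E = ((L `^ (1 - r) / (1 - r))%:E + (L `^ (1 - r) / (1 - r))%:E)%E.
  by rewrite -EFinD mulr2n mulrDl mul1r.
apply: leeD.
- apply: (le_trans _ (@pow_int_left R z L r L0 r0 r1)).
  apply: (@ge0_subset_integral _ _ _ lebesgue_measure _ _ mA (measurable_itv _)).
  + by move: mf; apply: measurable_funS.
  + by move=> x _; rewrite lee_fin powR_ge0.
  + by move=> x; rewrite /A /= !in_itv /= => /andP[-> /ltW ->].
- exact: pow_int_right.
Qed.

Lemma ivt0 (R : realType) (f : R -> R) (x y : R) : x <= y ->
  {within `[x, y], continuous f} -> f x * f y <= 0 ->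
  exists2 c, c \in `[x, y] & f c = 0.
Proof.
move=> xy cf h; apply: IVT => //.
rewrite ge_min le_max.
have [h1|h1|h1] := ltgtP (f x) 0; have [h2|h2|h2] := ltgtP (f y) 0; apply/andP; split; apply/orP;
  (by left; lra) || (by right; lra) || (by left; nra) || (by right; nra).
Qed.

Definition monoab {R : realType} (phi : R -> R) (a b : R) :=
  (forall x y, a <= x -> x <= y -> y <= b -> phi x <= phi y) \/
  (forall x y, a <= x -> x <= y -> y <= b -> phi y <= phi x).

Lemma sign_mono (R : realType) (phi phi' : R -> R) (a b : R) :
  (forall x, x \in `]a, b[ -> is_derive x 1 phi (phi' x)) ->
  {within `[a, b], continuous phi} ->
  {within `[a, b], continuous phi'} ->
  (forall x, x \in `]a, b[ -> phi' x != 0) ->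
  monoab phi a b.
Proof.
move=> dphi cphi cphi' nz.
have der x : x \in `]a, b[ -> derivable phi x 1 by move=> /dphi [].
have dval x : x \in `]a, b[ -> derive1 phi x = phi' x.
  by move=> /dphi h; rewrite derive1E derive_val.
have [pos|npos] := pselect (forall x, x \in `]a, b[ -> 0 < phi' x).
  left; apply: ger0_derive1_ndecr => // x xab.
  by rewrite dval // ltW // pos.
right; apply: ler0_derive1_nincr => // x xab; rewrite dval //.
apply/negPn/negP; rewrite -ltNge => h.
apply: npos => x' x'ab; apply/negPn/negP; rewrite -leNgt => h'.
have {}h' : phi' x' < 0 by rewrite lt_neqAle h' nz.
have sub : forall u v, u \in `]a, b[ -> v \in `]a, b[ -> `[u, v] `<=` `[a, b].
  move=> u v; rewrite !in_itv /= => /andP[? ?] /andP[? ?] t /=; rewrite !in_itv /=.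
  move=> /andP[? ?]; apply/andP; split; lra.
have sub' : forall u v, u \in `]a, b[ -> v \in `]a, b[ -> forall t, t \in `[u, v] -> t \in `]a, b[.
  move=> u v; rewrite !in_itv /= => /andP[? ?] /andP[? ?] t; rewrite !in_itv /=.
  move=> /andP[? ?]; apply/andP; split; lra.
have [xx'|x'x] := leP x x'.
- have [c cin c0] := @ivt0 R phi' x x' xx' (continuous_subspaceW (sub _ _ xab x'ab) cphi') ltac:(nra).
  by move: (nz c (sub' _ _ xab x'ab c cin)); rewrite c0 eqxx.
- have [c cin c0] := @ivt0 R phi' x' x (ltW x'x) (continuous_subspaceW (sub _ _ x'ab xab) cphi') ltac:(nra).
  by move: (nz c (sub' _ _ x'ab xab c cin)); rewrite c0 eqxx.
Qed.

Lemma qlb (R : realType) (phi phi' : R -> R) (a b c K e beta : R) :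
  0 <= K -> 0 <= beta -> 0 < e ->
  (forall x, x \in `]a, b[ -> is_derive x 1 phi (phi' x)) ->
  {within `[a, b], continuous phi} ->
  monoab phi a b ->
  (forall xi, xi \in `]a, b[ -> K * (`|xi - c| * e) `^ beta <= `|phi' xi|) ->
  forall x y, a <= x -> x <= y -> y <= b ->
    K * ((y - x) / 4 * e) `^ beta * ((y - x) / 4) <= `|phi y - phi x|.
Proof.
move=> K0 b0 e0 dphi cphi mono hlb x y ax xy yb.
have [exy|lxy] := eqVneq x y.
  by rewrite exy subrr mul0r mulr0.
have {lxy}xy' : x < y by rewrite lt_neqAle lxy xy.
pose d := y - x.
have d0 : 0 < d by rewrite /d; lra.
have [u [v [xu [uv [vy [vud P]]]]]] : exists u v, [/\ x <= u, u < v, v <= y, v - u = d / 4 &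
    forall xi, u < xi -> xi < v -> d / 4 <= `|xi - c|].
  have [cm|mc] := leP c ((x + y) / 2).
  - exists (y - d / 4), y; split; rewrite /d; try lra.
    move=> xi h1 h2; have := ler_norm (xi - c); lra.
  - exists x, (x + d / 4); split; rewrite /d; try lra.
    move=> xi h1 h2; have := ler_norm (- (xi - c)); rewrite normrN; lra.
have cuv : {within `[u, v], continuous phi}.
  apply: continuous_subspaceW cphi => t /=; rewrite !in_itv /= => /andP[? ?].
  apply/andP; split; lra.
have [xi xiin mvt] := @MVT R phi phi' u v uv
  (fun t tin => dphi t ltac:(move: tin; rewrite !in_itv /= => /andP[? ?]; apply/andP; split; lra)) cuv.
have xiab : xi \in `]a, b[.
  by move: xiin; rewrite !in_itv /= => /andP[? ?]; apply/andP; split; lra.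
move: xiin; rewrite in_itv /= => /andP[uxi xiv].
have key : `|phi v - phi u| <= `|phi y - phi x|.
  case: mono => hm.
  - have h1 := hm x u ax xu ltac:(lra).
    have h2 := hm u v ltac:(lra) (ltW uv) ltac:(lra).
    have h3 := hm v y ltac:(lra) vy yb.
    rewrite !ger0_norm; lra.
  - have h1 := hm x u ax xu ltac:(lra).
    have h2 := hm u v ltac:(lra) (ltW uv) ltac:(lra).
    have h3 := hm v y ltac:(lra) vy yb.
    rewrite !ler0_norm; lra.
apply: le_trans key; rewrite mvt vud normrM [`|d / 4|]ger0_norm; last lra.
rewrite -/d ler_pM2r; last lra.
apply: le_trans (hlb xi xiab).
rewrite ler_wpM2l //; apply: ge0_ler_powR => //; rewrite ?nnegrE.
- by rewrite mulr_ge0 //; lra.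
- by rewrite mulr_ge0 // ltW.
- by rewrite ler_pM2r //; apply: P.
Qed.

Lemma stage1 (R : realType) (t1 t2 A al a b th : R) (f : R -> R) :
  C2_on t1 t2 f -> t1 <= a -> a <= b -> b <= t2 -> 0 < A -> 0 < al ->
  (th <= a \/ b <= th) ->
  (forall s, s \in `[a, b] -> A * `|s - th| `^ al <= `|derive1 f s * derive1 (derive1 f) s|) ->
  exists c, (c = a \/ c = b) /\ forall s, s \in `[a, b] ->
    Num.sqrt (2 * A) * (`|s - c| * 4^-1) `^ ((al + 1) / 2) <= `|derive1 f s|.
Proof.
move=> [d1 d2 c2] t1a ab bt2 A0 al0 thab hyp.
set f1 := derive1 f; set f2 := derive1 f1.
have inT : forall x, x \in `[a, b] -> x \in `[t1, t2].
  move=> x; rewrite !in_itv /= => /andP[? ?]; apply/andP; split; lra.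
have oc : forall x, x \in `]a, b[ -> x \in `[a, b].
  by move=> x; rewrite !in_itv /= => /andP[? ?]; apply/andP; split; lra.
have df1 : forall x, x \in `[a, b] -> is_derive x 1 f1 (f2 x).
  move=> x /inT /d2 h; have := derivableP h.
  by rewrite /f2 derive1E.
pose phi := fun x => f1 x ^+ 2.
pose phi' := fun x => 2 * (f1 x * f2 x).
have dphi : forall x, x \in `[a, b] -> is_derive x 1 phi (phi' x).
  move=> x /df1 h; have := is_deriveX 2 h.
  rewrite /phi /phi' /= /GRing.scale /= expr1.
  have -> : (2%:R : R) = 2 by [].
  by rewrite mulrA.
have cf1 : {within `[a, b], continuous f1}.
  by apply: derivable_within_continuous => x /df1 [].
have cf2 : {within `[a, b], continuous f2}.
  apply: continuous_subspaceW c2 => x /=; rewrite !in_itv /= => /andP[? ?].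
  apply/andP; split; lra.
have cphi : {within `[a, b], continuous phi}.
  by apply: derivable_within_continuous => x /dphi [].
have cphi' : {within `[a, b], continuous phi'}.
  move=> x.
  apply: (@continuousM R (subspace `[a, b]) (fun=> 2) (fun x => f1 x * f2 x) x).
    exact: cst_continuous.
  exact: (@continuousM R (subspace `[a, b]) f1 f2 x (cf1 x) (cf2 x)).
have thne : forall x, x \in `]a, b[ -> 0 < `|x - th|.
  move=> x; rewrite in_itv /= => /andP[? ?]; rewrite normr_gt0 subr_eq0.
  by apply/eqP => ?; subst; case: thab; lra.
have lb : forall xi, xi \in `]a, b[ -> (2 * A) * (`|xi - th| * 1) `^ al <= `|phi' xi|.
  move=> xi xiab; rewrite mulr1 /phi' normrM ger0_norm // -mulrA ler_pM2l //.
  exact: hyp (oc _ xiab).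
have mono : monoab phi a b.
  apply: (@sign_mono R phi phi' a b (fun x xab => dphi x (oc x xab)) cphi cphi').
  move=> x xab; rewrite -normr_gt0; apply: (lt_le_trans _ (lb x xab)).
  rewrite mulr1; apply: mulr_gt0; first by apply: mulr_gt0.
  by apply: powR_gt0; apply: thne.
have A20 : 0 <= 2 * A by rewrite mulr_ge0 // ltW.
have Q := @qlb R phi phi' a b th (2 * A) 1 al A20 (ltW al0) ltr01
  (fun x xab => dphi x (oc x xab)) cphi mono lb.
have phi0 : forall x, 0 <= phi x by move=> x; rewrite /phi sqr_ge0.
have [c [hc Hc]] : exists c, (c = a \/ c = b) /\ forall s, s \in `[a, b] ->
    (2 * A) * (`|s - c| / 4) `^ al * (`|s - c| / 4) <= phi s.
  case: mono => hm.
  - exists a; split; first by left.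
    move=> s; rewrite in_itv /= => /andP[h1 h2].
    have e1 : `|s - a| = s - a by apply: ger0_norm; lra.
    rewrite e1.
    have hs := hm a s (lexx a) h1 h2.
    have p0 := phi0 a.
    have := Q a s (lexx a) h1 h2; rewrite mulr1.
    move=> HT; apply: (le_trans HT).
    rewrite ger0_norm; lra.
  - exists b; split; first by right.
    move=> s; rewrite in_itv /= => /andP[h1 h2].
    have e1 : `|s - b| = b - s by rewrite distrC; apply: ger0_norm; lra.
    rewrite e1.
    have hs := hm s b h1 h2 (lexx b).
    have p0 := phi0 b.
    have := Q s b h1 h2 (lexx b); rewrite mulr1.
    move=> HT; apply: (le_trans HT).
    rewrite ler0_norm; lra.
exists c; split => // s sab.
have Hs := Hc s sab.
set w := `|s - c| * 4^-1.
have w0 : 0 <= w by rewrite /w mulr_ge0 // invr_ge0.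
have sq : (Num.sqrt (2 * A) * w `^ ((al + 1) / 2)) ^+ 2 = (2 * A) * w `^ al * w.
  rewrite exprMn sqr_sqrtr; last lra.
  rewrite expr2 -powRD; last by apply/implyP => /eqP; lra.
  have -> : (al + 1) / 2 + (al + 1) / 2 = al + 1 by field.
  rewrite powRD; last by apply/implyP => /eqP; lra.
  by rewrite powRr1 // mulrA.
have -> : `|f1 s| = Num.sqrt (phi s) by rewrite /phi sqrtr_sqr.
rewrite -[X in X <= _]ger0_norm; last by rewrite mulr_ge0 ?sqrtr_ge0 ?powR_ge0.
rewrite -sqrtr_sqr sq; apply: ler_wsqrtr.
exact: Hs.
Qed.


Lemma stage2 (R : realType) (f f1 : R -> R) (a b c K q : R) :
  a <= b -> (c = a \/ c = b) -> 0 < K -> 0 < q ->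
  (forall x, x \in `[a, b] -> is_derive x 1 f (f1 x)) ->
  {within `[a, b], continuous f1} ->
  (forall s, s \in `[a, b] -> K * (`|s - c| * 4^-1) `^ q <= `|f1 s|) ->
  exists2 z, z \in `[a, b] &
    forall s, s \in `[a, b] -> K * (`|s - z| / 16) `^ (q + 1) <= `|f s|.
Proof.
move=> ab hc K0 q0 df cf1 hyp.
have oc : forall x, x \in `]a, b[ -> x \in `[a, b].
  by move=> x; rewrite !in_itv /= => /andP[? ?]; apply/andP; split; lra.
have cf : {within `[a, b], continuous f}.
  by apply: derivable_within_continuous => x /df [].
have lb : forall xi, xi \in `]a, b[ -> K * (`|xi - c| * 4^-1) `^ q <= `|f1 xi|.
  by move=> xi /oc /hyp.
have mono : monoab f a b.
  apply: (@sign_mono R f f1 a b (fun x xab => df x (oc x xab)) cf cf1).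
  move=> x xab; rewrite -normr_gt0; apply: (lt_le_trans _ (lb x xab)).
  apply: mulr_gt0 => //; apply: powR_gt0; apply: mulr_gt0; last by rewrite invr_gt0.
  rewrite normr_gt0 subr_eq0; apply/eqP => xc.
  by move: xab; rewrite in_itv /= xc; case: hc => ->; lra.
have Q := @qlb R f f1 a b c K (4^-1) q (ltW K0) (ltW q0) ltac:(by rewrite invr_gt0)
  (fun x xab => df x (oc x xab)) cf mono lb.
have cnf : {within `[a, b], continuous (fun x => `|f x|)}.
  move=> x.
  apply: (@continuous_comp (subspace `[a, b]) _ _ f (fun y : R => `|y|)); first exact: cf.
  exact: norm_continuous.
have [z zab zmin] := @EVT_min R (fun x => `|f x|) a b ab cnf.
exists z => // s sab.
have key : `|f s - f z| <= `|f s|.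
  have [h|h] := leP (f s * f z) 0.
  - have sub : forall u v, u \in `[a, b] -> v \in `[a, b] -> `[u, v] `<=` `[a, b].
      move=> u v; rewrite !in_itv /= => /andP[? ?] /andP[? ?] t /=; rewrite !in_itv /=.
      move=> /andP[? ?]; apply/andP; split; lra.
    have sub' : forall u v, u \in `[a, b] -> v \in `[a, b] -> forall t, t \in `[u, v] -> t \in `[a, b].
      move=> u v; rewrite !in_itv /= => /andP[? ?] /andP[? ?] t; rewrite !in_itv /=.
      move=> /andP[? ?]; apply/andP; split; lra.
    have [w win w0] : exists2 w, w \in `[a, b] & f w = 0.
      have [sz|zs] := leP s z.
      + have [w win w0] := @ivt0 R f s z sz (continuous_subspaceW (sub _ _ sab zab) cf) h.
        by exists w => //; exact: sub' win.
      + have [w win w0] := @ivt0 R f z s (ltW zs) (continuous_subspaceW (sub _ _ zab sab) cf) ltac:(nra).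
        by exists w => //; exact: sub' win.
    have := zmin w win; rewrite /= w0 normr0 normr_le0 => /eqP ->.
    by rewrite subr0.
  - have := zmin s sab; rewrite /=.
    have [hs|hs] := leP 0 (f s); have [hz|hz] := leP 0 (f z).
    + move=> hm; rewrite (ger0_norm hs) (ger0_norm hz) in hm.
      rewrite (ger0_norm hs) ger0_norm; lra.
    + by nra.
    + by nra.
    + move=> hm; rewrite (ler0_norm (ltW hs)) (ler0_norm (ltW hz)) in hm.
      rewrite (ler0_norm (ltW hs)) ler0_norm; lra.
have H : K * (`|s - z| / 4 * 4^-1) `^ q * (`|s - z| / 4) <= `|f s - f z|.
  move: sab zab; rewrite !in_itv /= => /andP[s1 s2] /andP[z1 z2].
  have [sz|zs] := leP s z.
  - have e : `|s - z| = z - s by rewrite distrC ger0_norm //; lra.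
    by rewrite e distrC; exact: Q s z s1 sz z2.
  - have e : `|s - z| = s - z by rewrite ger0_norm //; lra.
    by rewrite e; exact: Q z s z1 (ltW zs) s2.
apply: le_trans key; apply: le_trans H.
set d := `|s - z|.
have d0 : 0 <= d by exact: normr_ge0.
have -> : d / 4 * 4^-1 = d / 16 by field.
rewrite powRD; last by apply/implyP => /eqP; lra.
rewrite powRr1; last lra.
rewrite -[X in _ <= X]mulrA; apply: ler_wpM2l; first exact: ltW.
apply: ler_wpM2l; first exact: powR_ge0.
lra.
Qed.


Theorem lemma3p5 (R : realType) (t1 t2 g A al : R) :
  t1 < t2 -> 1 < g -> 0 < A -> 0 < al -> al < 2 * g - 3 ->
  exists C : R, 0 < C /\
    forall (f : R -> R) (a b : R),
      C2_on t1 t2 f -> t1 <= a -> a <= b -> b <= t2 ->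
      ({in `[a, b], forall s,
          A * (s - t1) `^ al <= `|derive1 f s * derive1 (derive1 f) s|} \/
       {in `[a, b], forall s,
          A * (t2 - s) `^ al <= `|derive1 f s * derive1 (derive1 f) s|}) ->
      (\int[lebesgue_measure]_(s in `[a, b]) neg_pow_abs g f s <= C%:E)%E.
Proof.
move=> t12 g1 A0 al0 alg.
pose p := g^-1.
pose q := (al + 1) / 2.
pose r := p * (q + 1).
pose K := Num.sqrt (2 * A).
pose L := t2 - t1.
pose M := K `^ (- p) * (16^-1) `^ (- r).
have g0 : 0 < g by lra.
have p0 : 0 < p by rewrite /p invr_gt0.
have q0 : 0 < q by rewrite /q; lra.
have r0 : 0 <= r by rewrite /r mulr_ge0 // ltW //; lra.
have r1 : r < 1.
  rewrite /r /p mulrC ltr_pdivrMr // mul1r /q; lra.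
have K0 : 0 < K by rewrite /K sqrtr_gt0; lra.
have L0 : 0 < L by rewrite /L; lra.
have M0 : 0 < M by rewrite /M mulr_gt0 // powR_gt0 // invr_gt0.
have I0 : 0 < 2 * (L `^ (1 - r) / (1 - r)).
  by rewrite mulr_gt0 // divr_gt0 ?powR_gt0 //; lra.
exists (M * (2 * (L `^ (1 - r) / (1 - r)))); split; first exact: mulr_gt0.
move=> f a b C2 t1a ab bt2 hyp.
have [th [thab hth]] : exists th, (th <= a \/ b <= th) /\ forall s, s \in `[a, b] ->
    A * `|s - th| `^ al <= `|derive1 f s * derive1 (derive1 f) s|.
  case: hyp => h; [exists t1 | exists t2]; split; [by left | | by right | ].
  - move=> s sab; have := sab; rewrite in_itv /= => /andP[s1 s2].
    by rewrite ger0_norm; [exact: h | lra].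
  - move=> s sab; have := sab; rewrite in_itv /= => /andP[s1 s2].
    by rewrite distrC ger0_norm; [exact: h | lra].
have [c [hc Hc]] := @stage1 R t1 t2 A al a b th f C2 t1a ab bt2 A0 al0 thab hth.
case: C2 => d1 d2 c2.
have inT : forall x, x \in `[a, b] -> x \in `[t1, t2].
  move=> x; rewrite !in_itv /= => /andP[? ?]; apply/andP; split; lra.
have df : forall x, x \in `[a, b] -> is_derive x 1 f (derive1 f x).
  move=> x /inT /d1 h; have := derivableP h.
  by rewrite derive1E.
have cf1 : {within `[a, b], continuous (derive1 f)}.
  by apply: derivable_within_continuous => x /inT /d2.
have [z zab Hz] := @stage2 R f (derive1 f) a b c K q ab hc K0 q0 df cf1 Hc.
have cf : {within `[a, b], continuous f}.
  by apply: derivable_within_continuous => x /df [].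
pose D' := `[a, b]%classic `\ z.
have mD' : measurable D' by apply: measurableD; [exact: measurable_itv | exact: measurable_set1].
have D'ab : D' `<=` `[a, b] by move=> x [].
have bnd : forall s, D' s -> 0 < K * (`|s - z| / 16) `^ (q + 1) /\
    K * (`|s - z| / 16) `^ (q + 1) <= `|f s|.
  move=> s [sab /= snz]; split; last exact: Hz.
  apply: mulr_gt0 => //; apply: powR_gt0; apply: divr_gt0 => //.
  by rewrite normr_gt0 subr_eq0; apply/eqP.
have fnz : forall s, D' s -> f s != 0.
  move=> s /bnd [h1 h2]; rewrite -normr_gt0; exact: lt_le_trans h2.
have mf : measurable_fun `[a, b] f.
  by apply: subspace_continuous_measurable_fun => //; exact: measurable_itv.
have mG : measurable_fun D' (EFin \o (fun s => `|f s| `^ (- g^-1))).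
  apply: measurableT_comp => //.
  apply: (@measurableT_comp _ _ _ _ _ _ (@powR R ^~ (- g^-1))); first exact: measurable_powR.
  apply: (@measurableT_comp _ _ _ _ _ _ (fun x : R => `|x|)) => //.
  exact: measurable_funS mf.
have eqG : {in D', (EFin \o (fun s => `|f s| `^ (- g^-1))) =1 neg_pow_abs g f}.
  move=> s; rewrite inE => /fnz h; by rewrite /neg_pow_abs (negbTE h).
have mN : measurable_fun D' (neg_pow_abs g f) by exact: eq_measurable_fun eqG mG.
rewrite -(@integral_setD1 R _ z _ mD' mN).
have mh : measurable_fun setT (fun s : R => (M * `|s - z| `^ (- r))%:E).
  apply: measurableT_comp => //.
  apply: measurable_funM => //.
  apply: (@measurableT_comp _ _ _ _ _ _ (@powR R ^~ (- r))); first exact: measurable_powR.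
  apply: (@measurableT_comp _ _ _ _ _ _ (fun x : R => `|x|)) => //.
  exact: measurable_funB.
have N0 : forall s, D' s -> (0 <= neg_pow_abs g f s)%E.
  move=> s Ds; rewrite -(eqG s) ?inE //= lee_fin; exact: powR_ge0.
have PW : forall s, D' s -> (neg_pow_abs g f s <= (M * `|s - z| `^ (- r))%:E)%E.
  move=> s Ds; rewrite -(eqG s) ?inE //= lee_fin.
  have [Y0 Yf] := bnd s Ds.
  set Y := K * (`|s - z| / 16) `^ (q + 1) in Y0 Yf.
  apply: (@le_trans _ _ (Y `^ (- g^-1))).
    rewrite !powRN lef_pV2 ?posrE ?powR_gt0 //; last exact: lt_le_trans Yf.
    by apply: ge0_ler_powR; rewrite ?nnegrE ?(ltW Y0) //; exact: ltW.
  have d0 : 0 <= `|s - z| by [].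
  have i16 : (0:R) <= 16^-1 by rewrite invr_ge0.
  rewrite /Y (powRM _ (ltW K0) (powR_ge0 _ _)) -powRrM.
  have -> : (q + 1) * - g^-1 = - r by rewrite /r /p; ring.
  rewrite (powRM _ d0 i16) /M /p.
  rewrite le_eqVlt; apply/orP; left; apply/eqP; ring.
apply: (le_trans (@ge0_le_integral _ _ _ lebesgue_measure D' mD' (neg_pow_abs g f)
  (fun s => (M * `|s - z| `^ (- r))%:E) N0 mN (measurable_funS measurableT (@subsetT _ _) mh) PW)).
have subL : D' `<=` `[(z - L)%R, (z + L)%R].
  move=> x [/= + _]; move: zab; rewrite !in_itv /= /L => /andP[? ?] /andP[? ?].
  apply/andP; split; lra.
apply: (le_trans (@ge0_subset_integral _ _ _ lebesgue_measure _ _ mD' (measurable_itv _) _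
  (measurable_funS measurableT (@subsetT _ _) mh) _ subL)).
  by move=> x _; rewrite lee_fin mulr_ge0 ?powR_ge0 // ltW.
have -> : (\int[lebesgue_measure]_(x in `[(z - L)%R, (z + L)%R]) (M * `|x - z| `^ (- r))%:E =
    \int[lebesgue_measure]_(x in `[(z - L)%R, (z + L)%R]) (M%:E * (`|x - z| `^ (- r))%:E))%E.
  by apply: eq_integral => x _; rewrite EFinM.
have N1 : forall x, [set` `[(z - L)%R, (z + L)%R]] x -> (0 <= (`|x - z| `^ (- r))%:E)%E.
  by move=> x _; rewrite lee_fin powR_ge0.
have mh1 : measurable_fun [set` `[(z - L)%R, (z + L)%R]] (fun x => (`|x - z| `^ (- r))%:E).
  by move: (@meas_pow R z (- r)); apply: measurable_funS.
rewrite (@ge0_integralZl_EFin _ _ _ lebesgue_measure _ (measurable_itv _) _ N1 mh1 _ (ltW M0)).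
rewrite [in X in (_ <= X)%E]EFinM.
apply: lee_wpmul2l; first by rewrite lee_fin ltW.
exact: pow_int_two.
Qed.
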